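(* Let $f\in\mathbb R[x_1,\dots,x_n]$ satisfy conditions (C1), (C2), (C3) and let $\lambda_f$ be a map of minimal barycentric coordinates of $f$. If \[ \sum_{\alpha^\star\in D(f)\cap(2\mathbb N_0^n)^c}\frac{|f_{\alpha^\star}|}{\Theta(f,\lambda_f,\alpha^\star)}-\sum_{\alpha^\star\in D(f)\cap 2\mathbb N_0^n}\frac{\min\{0,f_{\alpha^\star}\}}{\Theta(f,\lambda_f,\alpha^\star)}<1, \] then $f$ is coercive on $\mathbb R^n$, i.e. $f(x)\to+\infty$ whenever $\|x\|\to+\infty$.
   Context: Notation: $\mathbb N_0=\mathbb N\cup\{0\}$, $[n]=\{1,\dots,n\}$, $e_i$ the standard unit vectors, $(2\mathbb N_0^n)^c=\mathbb N_0^n\setminus 2\mathbb N_0^n$. Write $f(x)=\sum_{\alpha\in A(f)}f_\alpha x^\alpha$ with $A(f)\subseteq\mathbb N_0^n$ finite and $f_\alpha\neq0$ for $\alpha\in A(f)$. The Newton polytope at infinity is $\mathrm{New}_\infty(f)=\mathrm{conv}(A(f)\cup\{0\})$; $V_0(f)$ is its vertex set (it contains $0$), $V(f)=V_0(f)\setminus\{0\}$, $V_0^c(f)=A(f)\setminus V_0(f)$, $V^c(f)=A(f)\setminus V(f)$. Conditions: (C1) $V(f)\subset 2\mathbb N_0^n$; (C2) $f_\alpha>0$ for all $\alpha\in V(f)$; (C3) for every $i\in[n]$, $V(f)$ contains a vector $2k_ie_i$ with $k_i\in\mathbb N$. Let $\mathcal G(f)$ be the set of nonempty faces $G$ of $\mathrm{New}_\infty(f)$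 with $0\notin G$. An exponent $\alpha\in A(f)$ is gem degenerate if $\alpha\in V^c(f)\cap G$ for some $G\in\mathcal G(f)$; $D(f)$ is the set of gem degenerate exponents. A map of minimal barycentric coordinates of $f$ is a map $\lambda_f:V_0^c(f)\times V_0(f)\to[0,1]$ such that for each $\alpha^\star\in V_0^c(f)$ there is an affinely independent set $W_{\alpha^\star}\subseteq V_0(f)$ with $\lambda_f(\alpha^\star,\alpha)>0$ for $\alpha\in W_{\alpha^\star}$, $\lambda_f(\alpha^\star,\alpha)=0$ for $\alpha\in V_0(f)\setminus W_{\alpha^\star}$, and $\sum_{\alpha\in W_{\alpha^\star}}\lambda_f(\alpha^\star,\alpha)(\alpha,1)=(\alpha^\star,1)$. Write $W_{\alpha^\star}(\lambda_f)=\{\alpha\in V_0(f):\lambda_f(\alpha^\star,\alpha)>0\}$. The circuit number is $\Theta(f,\lambda_f,\alpha^\star)=\prod_{\alpha\in W_{\alpha^\star}(\lambda_f)}\bigl(f_\alpha/\lambda_f(\alpha^\star,\alpha)\bigr)^{\lambda_f(\alpha^\star,\alpha)}$; under (C2),(C3) it is positive for every $\alpha^\star\in D(f)$. *)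

(* Defs.v *)
From Stdlib Require Import Reals Lra List Arith Bool ClassicalEpsilon.
Import ListNotations.
Open Scope R_scope.

(* Exponent vectors alpha in N_0^n are functions nat -> nat (only the
   coordinates i < n matter; support exponents are required to vanish
   for i >= n).  Points of R^n are functions nat -> R, coordinates i < n. *)
Definition expo := nat -> nat.
Definition pt := nat -> R.

Definition Rsum (m : nat) (g : nat -> R) : R :=
  fold_right Rplus 0 (map g (seq 0 m)).
Definition Rprod (m : nat) (g : nat -> R) : R :=
  fold_right Rmult 1 (map g (seq 0 m)).

Definition zero_exp : expo := fun _ => 0%nat.
Definition toR (a : expo) : pt := fun i => INR (a i).
Definition dot (n : nat) (w y : pt) : R := Rsum n (fun i => w i * y i).

Definition nzb (n : nat) (a : expo) : bool :=
  existsb (fun i => negb (Nat.eqb (a i) 0)) (seq 0 n).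
Definition nonzero (n : nat) (a : expo) : Prop := exists i, (i < n)%nat /\ a i <> 0%nat.
Definition all_even (n : nat) (a : expo) : bool :=
  forallb (fun i => Nat.even (a i)) (seq 0 n).

Definition eval (n : nat) (A : list expo) (coef : expo -> R) (x : pt) : R :=
  fold_right Rplus 0 (map (fun a => coef a * Rprod n (fun i => x i ^ a i)) A).

Definition norm (n : nat) (x : pt) : R := sqrt (Rsum n (fun i => x i ^ 2)).

Definition wf_poly (n : nat) (A : list expo) (coef : expo -> R) : Prop :=
  NoDup A /\
  (forall a, In a A -> forall i, (n <= i)%nat -> a i = 0%nat) /\
  (forall a, In a A -> coef a <> 0) /\
  (forall a, coef a <> 0 -> In a A).

Definition gens (A : list expo) : list pt := map toR (zero_exp :: A).

Definition inNew (n : nat) (A : list expo) (p : pt) : Prop :=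
  let S := gens A in
  exists mu : nat -> R,
    (forall j, (j < length S)%nat -> 0 <= mu j) /\
    Rsum (length S) mu = 1 /\
    forall i, (i < n)%nat ->
      p i = Rsum (length S) (fun j => mu j * nth j S (fun _ => 0) i).

Definition is_vertex (n : nat) (A : list expo) (v : pt) : Prop :=
  inNew n A v /\
  forall y z t, inNew n A y -> inNew n A z -> 0 < t < 1 ->
    (forall i, (i < n)%nat -> v i = t * y i + (1 - t) * z i) ->
    forall i, (i < n)%nat -> y i = z i.

(* alpha in V_0(f)  (vertices lie among the generators A(f) u {0}) *)
Definition inV0 (n : nat) (A : list expo) (a : expo) : Prop :=
  In a (zero_exp :: A) /\ is_vertex n A (toR a).
Definition inV (n : nat) (A : list expo) (a : expo) : Prop :=
  inV0 n A a /\ nonzero n a.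

(* faces of New_infty(f): intersections with supporting hyperplanes
   (this includes the empty face and the whole polytope) *)
Definition is_face (n : nat) (A : list expo) (G : pt -> Prop) : Prop :=
  exists (w : pt) (c : R),
    (forall y, inNew n A y -> dot n w y <= c) /\
    forall y, G y <-> (inNew n A y /\ dot n w y = c).

Definition inGcal (n : nat) (A : list expo) (G : pt -> Prop) : Prop :=
  is_face n A G /\ (exists y, G y) /\ ~ G (toR zero_exp).

Definition gem_degenerate (n : nat) (A : list expo) (a : expo) : Prop :=
  In a A /\ ~ inV n A a /\ exists G, inGcal n A G /\ G (toR a).

Definition aff_indep (n : nat) (W : list expo) : Prop :=
  forall mu : nat -> R,
    (forall i, (i < n)%nat ->
       Rsum (length W) (fun j => mu j * INR (nth j W zero_exp i)) = 0) ->
    Rsum (length W) mu = 0 ->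
    forall j, (j < length W)%nat -> mu j = 0.

(* map of minimal barycentric coordinates lam : V_0^c(f) x V_0(f) -> [0,1]
   (given as a total function; values outside V_0^c x V_0 are irrelevant) *)
Definition min_bary (n : nat) (A : list expo) (lam : expo -> expo -> R) : Prop :=
  forall s, In s A -> ~ inV0 n A s ->
    (forall a, inV0 n A a -> 0 <= lam s a <= 1) /\
    exists W : list expo,
      NoDup W /\ (forall a, In a W -> inV0 n A a) /\ aff_indep n W /\
      (forall a, In a W -> lam s a > 0) /\
      (forall a, inV0 n A a -> ~ In a W -> lam s a = 0) /\
      (forall i, (i < n)%nat ->
         Rsum (length W) (fun j => lam s (nth j W zero_exp) * INR (nth j W zero_exp i))
         = INR (s i)) /\
      Rsum (length W) (fun j => lam s (nth j W zero_exp)) = 1.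

Definition decP (P : Prop) : bool :=
  if excluded_middle_informative P then true else false.

(* A(f) u {0} without repetition (0 listed once) *)
Definition gens_exp (n : nat) (A : list expo) : list expo :=
  zero_exp :: filter (nzb n) A.

Definition Theta (n : nat) (A : list expo) (coef : expo -> R)
  (lam : expo -> expo -> R) (s : expo) : R :=
  fold_right Rmult 1
    (map (fun a => if decP (inV0 n A a /\ lam s a > 0)
                   then Rpower (coef a / lam s a) (lam s a) else 1)
         (gens_exp n A)).

Definition gem_sum (n : nat) (A : list expo) (coef : expo -> R)
  (lam : expo -> expo -> R) : R :=
  fold_right Rplus 0
    (map (fun s => if decP (gem_degenerate n A s) then
                     (if all_even n s
                      then - (Rmin 0 (coef s) / Theta n A coef lam s)
                      else Rabs (coef s) / Theta n A coef lam s)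
                   else 0) A).

Definition condC1 (n : nat) (A : list expo) : Prop :=
  forall a, inV n A a -> all_even n a = true.
Definition condC2 (n : nat) (A : list expo) (coef : expo -> R) : Prop :=
  forall a, inV n A a -> coef a > 0.
Definition condC3 (n : nat) (A : list expo) : Prop :=
  forall i, (i < n)%nat -> exists k : nat, (1 <= k)%nat /\
    exists a, inV n A a /\ a i = (2 * k)%nat /\
      forall j, (j < n)%nat -> j <> i -> a j = 0%nat.

Definition coercive (n : nat) (A : list expo) (coef : expo -> R) : Prop :=
  forall M : R, exists r : R, forall x : pt, norm n x > r -> eval n A coef x > M.

(* Main.v *)
Require Import Defs.
From Stdlib Require Import Reals Lra Lia List Permutation Arith Bool ClassicalEpsilon Classical FunctionalExtensionality.
Import ListNotations.
Open Scope R_scope.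

Lemma Rsum_0 g : Rsum 0 g = 0.
Proof. reflexivity. Qed.

Lemma Rsum_shift m g : Rsum (S m) g = g 0%nat + Rsum m (fun j => g (S j)).
Proof.
  unfold Rsum. simpl. f_equal. rewrite <- seq_shift, map_map. reflexivity.
Qed.

Lemma Rsum_S m g : Rsum (S m) g = Rsum m g + g m.
Proof.
  revert g; induction m; intro g.
  - rewrite Rsum_shift, !Rsum_0. lra.
  - rewrite Rsum_shift, IHm, Rsum_shift. lra.
Qed.

Lemma Rsum_ext m g h : (forall j, (j < m)%nat -> g j = h j) -> Rsum m g = Rsum m h.
Proof.
  induction m; intro H. reflexivity.
  rewrite !Rsum_S, IHm by (intros; apply H; lia). rewrite H by lia. reflexivity.
Qed.

Lemma Rsum_plus m g h : Rsum m (fun j => g j + h j) = Rsum m g + Rsum m h.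
Proof. induction m. rewrite !Rsum_0; lra. rewrite !Rsum_S, IHm. lra. Qed.

Lemma Rsum_minus m g h : Rsum m (fun j => g j - h j) = Rsum m g - Rsum m h.
Proof. induction m. rewrite !Rsum_0; lra. rewrite !Rsum_S, IHm. lra. Qed.

Lemma Rsum_scal m c g : Rsum m (fun j => c * g j) = c * Rsum m g.
Proof. induction m. rewrite !Rsum_0; lra. rewrite !Rsum_S, IHm. lra. Qed.

Lemma Rsum_scal_r m c g : Rsum m (fun j => g j * c) = Rsum m g * c.
Proof. induction m. rewrite !Rsum_0; lra. rewrite !Rsum_S, IHm. lra. Qed.

Lemma Rsum_le m g h : (forall j, (j < m)%nat -> g j <= h j) -> Rsum m g <= Rsum m h.
Proof.
  induction m; intro H. rewrite !Rsum_0; lra.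
  rewrite !Rsum_S. assert (g m <= h m) by (apply H; lia).
  assert (Rsum m g <= Rsum m h) by (apply IHm; intros; apply H; lia). lra.
Qed.

Lemma Rsum_zero m g : (forall j, (j < m)%nat -> g j = 0) -> Rsum m g = 0.
Proof.
  intro H. rewrite (Rsum_ext m g (fun _ => 0)) by auto.
  induction m. reflexivity. rewrite Rsum_S, IHm by (intros; apply H; lia). lra.
Qed.

Lemma Rsum_nonneg m g : (forall j, (j < m)%nat -> 0 <= g j) -> 0 <= Rsum m g.
Proof.
  intro H. rewrite <- (Rsum_zero m (fun _ => 0)) by auto. apply Rsum_le. auto.
Qed.

Lemma Rsum_ge_term m g k : (k < m)%nat -> (forall j, (j < m)%nat -> 0 <= g j) -> g k <= Rsum m g.
Proof.
  induction m; intros Hk H. lia.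
  rewrite Rsum_S. destruct (Nat.eq_dec k m).
  - subst. assert (0 <= Rsum m g) by (apply Rsum_nonneg; intros; apply H; lia). lra.
  - assert (g k <= Rsum m g) by (apply IHm; [lia| intros; apply H; lia]).
    assert (0 <= g m) by (apply H; lia). lra.
Qed.

Lemma Rsum_eq0 m g : (forall j, (j < m)%nat -> 0 <= g j) -> Rsum m g = 0 ->
  forall j, (j < m)%nat -> g j = 0.
Proof.
  intros H Hs j Hj. pose proof (Rsum_ge_term m g j Hj H). pose proof (H j Hj). lra.
Qed.

Lemma Rsum_swap m k F :
  Rsum m (fun i => Rsum k (fun j => F i j)) = Rsum k (fun j => Rsum m (fun i => F i j)).
Proof.
  induction m.
  - rewrite Rsum_0. symmetry. apply Rsum_zero. intros. apply Rsum_0.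
  - rewrite Rsum_S, IHm. rewrite <- Rsum_plus. apply Rsum_ext. intros. rewrite Rsum_S. reflexivity.
Qed.

Lemma Rsum_single m k c : (k < m)%nat -> Rsum m (fun j => if Nat.eqb j k then c else 0) = c.
Proof.
  induction m; intro Hk. lia.
  rewrite Rsum_S. destruct (Nat.eq_dec k m).
  - subst. rewrite Nat.eqb_refl. rewrite Rsum_zero. lra.
    intros j Hj. destruct (Nat.eqb_spec j m). lia. reflexivity.
  - rewrite IHm by lia. destruct (Nat.eqb_spec m k). lia. lra.
Qed.

Definition lsum {T} (L : list T) (h : T -> R) : R := fold_right Rplus 0 (map h L).

Lemma lsum_nil {T} (h : T -> R) : lsum [] h = 0.
Proof. reflexivity. Qed.
Lemma lsum_cons {T} (a : T) L h : lsum (a :: L) h = h a + lsum L h.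
Proof. reflexivity. Qed.

Lemma Rsum_list {T} (L : list T) d h :
  Rsum (length L) (fun j => h (nth j L d)) = lsum L h.
Proof.
  induction L. reflexivity.
  simpl length. rewrite Rsum_shift, lsum_cons. simpl. rewrite IHL. reflexivity.
Qed.

Lemma lsum_perm {T} (L L' : list T) h : Permutation L L' -> lsum L h = lsum L' h.
Proof.
  induction 1; try reflexivity.
  - rewrite !lsum_cons, IHPermutation. reflexivity.
  - rewrite !lsum_cons. lra.
  - congruence.
Qed.

Lemma lsum_app {T} (L L' : list T) h : lsum (L ++ L') h = lsum L h + lsum L' h.
Proof. induction L. simpl. unfold lsum; simpl; lra. simpl. rewrite !lsum_cons, IHL. lra. Qed.

Lemma lsum_ext {T} (L : list T) g h : (forall a, In a L -> g a = h a) -> lsum L g = lsum L h.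
Proof.
  induction L; intro H. reflexivity. rewrite !lsum_cons, H, IHL. reflexivity.
  intros; apply H; simpl; auto. simpl; auto.
Qed.

Lemma lsum_le {T} (L : list T) g h : (forall a, In a L -> g a <= h a) -> lsum L g <= lsum L h.
Proof.
  induction L; intro H. unfold lsum; simpl; lra. rewrite !lsum_cons.
  assert (g a <= h a) by (apply H; simpl; auto).
  assert (lsum L g <= lsum L h) by (apply IHL; intros; apply H; simpl; auto). lra.
Qed.

Lemma lsum_nonneg {T} (L : list T) h : (forall a, In a L -> 0 <= h a) -> 0 <= lsum L h.
Proof.
  intro H. replace 0 with (lsum L (fun _ => 0)). apply lsum_le; auto.
  induction L. reflexivity. rewrite lsum_cons, IHL. lra. intros; apply H; simpl; auto.
Qed.

Lemma lsum_scal {T} (L : list T) c h : lsum L (fun a => c * h a) = c * lsum L h.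
Proof. induction L. unfold lsum; simpl; lra. rewrite !lsum_cons, IHL. lra. Qed.

Lemma lsum_plus {T} (L : list T) g h : lsum L (fun a => g a + h a) = lsum L g + lsum L h.
Proof. induction L. unfold lsum; simpl; lra. rewrite !lsum_cons, IHL. lra. Qed.

Lemma lsum_minus {T} (L : list T) g h : lsum L (fun a => g a - h a) = lsum L g - lsum L h.
Proof. induction L. unfold lsum; simpl; lra. rewrite !lsum_cons, IHL. lra. Qed.

Lemma lsum_ge_term {T} (L : list T) h a : In a L -> (forall b, In b L -> 0 <= h b) -> h a <= lsum L h.
Proof.
  induction L; intros Ha H. destruct Ha.
  rewrite lsum_cons. destruct Ha as [<-|Ha].
  - assert (0 <= lsum L h) by (apply lsum_nonneg; intros; apply H; simpl; auto). lra.
  - assert (h a <= lsum L h) by (apply IHL; auto; intros; apply H; simpl; auto).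
    assert (0 <= h a0) by (apply H; simpl; auto). lra.
Qed.

Lemma lsum_sub {T} (W L : list T) h : NoDup W -> incl W L -> (forall b, In b L -> 0 <= h b) ->
  lsum W h <= lsum L h.
Proof.
  revert W. induction L as [|b L IH]; intros W HW Hinc H.
  - destruct W. unfold lsum; simpl; lra. exfalso. apply (Hinc t). simpl; auto.
  - rewrite lsum_cons. destruct (classic (In b W)) as [Hb|Hb].
    + apply in_split in Hb. destruct Hb as [W1 [W2 ->]].
      rewrite (lsum_perm _ (b :: W1 ++ W2)) by (symmetry; apply Permutation_middle).
      rewrite lsum_cons.
      assert (lsum (W1 ++ W2) h <= lsum L h).
      { apply IH.
        - apply NoDup_remove_1 in HW. auto.
        - intros x Hx. assert (In x (b :: L)) by (apply Hinc; apply in_app_or in Hx; apply in_or_app; simpl; tauto).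
          destruct H0 as [<-|]; auto. exfalso. apply NoDup_remove_2 in HW. auto.
        - intros; apply H; simpl; auto. }
      lra.
    + assert (lsum W h <= lsum L h).
      { apply IH; auto. intros x Hx. destruct (Hinc x Hx) as [<-|]; tauto.
        intros; apply H; simpl; auto. }
      assert (0 <= h b) by (apply H; simpl; auto). lra.
Qed.

Lemma lsum_filter {T} (L : list T) (p : T -> bool) h :
  lsum L (fun a => if p a then h a else 0) = lsum (filter p L) h.
Proof.
  induction L. reflexivity. simpl. rewrite lsum_cons, IHL. destruct (p a). reflexivity. lra.
Qed.

Lemma prod_if_exp {T} (L : list T) (p : T -> bool) (x y : T -> R) :
  fold_right Rmult 1 (map (fun a => if p a then Rpower (x a) (y a) else 1) L)
  = exp (lsum L (fun a => if p a then y a * ln (x a) else 0)).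
Proof.
  induction L. simpl. unfold lsum; simpl. rewrite exp_0; reflexivity.
  simpl. rewrite IHL, lsum_cons, exp_plus. destruct (p a). reflexivity. rewrite exp_0. lra.
Qed.


Lemma dot_lin_r d y (u v : pt) c : dot d y (fun i => u i - c * v i) = dot d y u - c * dot d y v.
Proof.
  unfold dot. rewrite <- Rsum_scal, <- Rsum_minus. apply Rsum_ext. intros. ring.
Qed.

Lemma dot_lin_l d (u v : pt) c w : dot d (fun i => u i - c * v i) w = dot d u w - c * dot d v w.
Proof.
  unfold dot. rewrite <- Rsum_scal, <- Rsum_minus. apply Rsum_ext. intros. ring.
Qed.

Definition feasible d m (C : nat -> pt) (b : pt) :=
  exists mu : nat -> R, (forall j, (j<m)%nat -> 0 <= mu j) /\
     forall i, (i<d)%nat -> Rsum m (fun j => mu j * C j i) = b i.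

Lemma farkas d m : forall (C : nat -> pt) (b : pt),
  feasible d m C b \/
  exists y, (forall j, (j<m)%nat -> 0 <= dot d y (C j)) /\ dot d y b < 0.
Proof.
  induction m; intros C b.
  - destruct (classic (forall i, (i<d)%nat -> b i = 0)) as [H|H].
    + left. exists (fun _ => 0). split. intros; lra. intros. rewrite Rsum_0, H; auto.
    + right. exists (fun i => - b i). split. intros; lia.
      apply not_all_ex_not in H. destruct H as [k Hk].
      apply imply_to_and in Hk. destruct Hk as [Hk Hbk].
      unfold dot.
      assert (b k * b k <= Rsum d (fun i => b i * b i)).
      { apply (Rsum_ge_term d (fun i => b i * b i) k Hk). intros. nra. }
      assert (0 < b k * b k) by nra.
      rewrite (Rsum_ext _ _ (fun i => -1 * (b i * b i))) by (intros; ring).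
      rewrite Rsum_scal. lra.
  - destruct (classic (feasible d (S m) C b)) as [Hf|Hf]. left; auto. right.
    destruct (IHm (fun j => C (S j)) b) as [H1|[y [Hy1 Hy2]]].
    { exfalso. apply Hf. destruct H1 as [mu [Hmu1 Hmu2]].
      exists (fun j => match j with O => 0 | S j' => mu j' end). split.
      - intros [|j] Hj. lra. apply Hmu1. lia.
      - intros i Hi. rewrite Rsum_shift. rewrite <- Hmu2 by auto. lra. }
    set (a := C 0%nat). set (al := dot d y a).
    destruct (Rle_or_lt 0 al) as [Hal|Hal].
    { exists y. split; auto. intros [|j] Hj. auto. apply Hy1. lia. }
    set (C2 := fun j => fun i => C (S j) i - (dot d y (C (S j)) / al) * a i).
    set (b2 := fun i => b i - (dot d y b / al) * a i).
    destruct (IHm C2 b2) as [H2|[z [Hz1 Hz2]]].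
    { exfalso. apply Hf. destruct H2 as [mu [Hmu1 Hmu2]].
      set (th := dot d y b / al - Rsum m (fun j => mu j * dot d y (C (S j)) / al)).
      exists (fun j => match j with O => th | S j' => mu j' end). split.
      - intros [|j] Hj.
        + unfold th. assert (0 < dot d y b / al).
          { apply Rdiv_neg_neg; auto. }
          assert (Rsum m (fun j => mu j * dot d y (C (S j)) / al) <= 0).
          { rewrite <- (Rsum_zero m (fun _ => 0)) by auto. apply Rsum_le. intros j Hj'.
            assert (0 <= mu j * dot d y (C (S j))) by (apply Rmult_le_pos; auto).
            unfold Rdiv. assert (/ al < 0) by (apply Rinv_lt_0_compat; auto). nra. }
          lra.
        + apply Hmu1. lia.
      - intros i Hi. rewrite Rsum_shift. specialize (Hmu2 i Hi). unfold C2, b2 in Hmu2; cbv beta in Hmu2.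
        rewrite (Rsum_ext _ _ (fun j => mu j * C (S j) i - (mu j * dot d y (C (S j)) / al) * a i)) in Hmu2 by (intros; unfold Rdiv; ring).
        rewrite Rsum_minus, Rsum_scal_r in Hmu2. fold a. unfold th. lra. }
    exists (fun i => z i - (dot d z a / al) * y i). split.
    + intros [|j] Hj.
      * rewrite dot_lin_l. fold a. fold al. field_simplify; lra.
      * rewrite dot_lin_l. specialize (Hz1 j ltac:(lia)). unfold C2 in Hz1; cbv beta in Hz1.
        rewrite dot_lin_r in Hz1. lra.
    + rewrite dot_lin_l. unfold b2 in Hz2. rewrite dot_lin_r in Hz2. lra.
Qed.


Lemma toR_zero : toR zero_exp = (fun _ => 0).
Proof. apply functional_extensionality. intro. reflexivity. Qed.

Lemma gens_len A : length (gens A) = S (length A).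
Proof. unfold gens. rewrite length_map. reflexivity. Qed.

Lemma gens_nth A j : nth j (gens A) (fun _ => 0) = toR (nth j (zero_exp :: A) zero_exp).
Proof. unfold gens. rewrite <- toR_zero. apply map_nth. Qed.

Lemma Rsum_pick m k (F : nat -> R) : (k < m)%nat ->
  Rsum m (fun j => (if Nat.eqb j k then 1 else 0) * F j) = F k.
Proof.
  intro Hk. rewrite (Rsum_ext _ _ (fun j => if Nat.eqb j k then F k else 0)).
  apply Rsum_single; auto.
  intros j Hj. destruct (Nat.eqb_spec j k). subst; ring. ring.
Qed.

Lemma inNew_gen n A a : In a (zero_exp :: A) -> inNew n A (toR a).
Proof.
  intro Ha. apply In_nth with (d := zero_exp) in Ha. destruct Ha as [k [Hk Hka]].
  unfold inNew. rewrite gens_len. simpl length in Hk.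
  exists (fun j => if Nat.eqb j k then 1 else 0). split; [|split].
  - intros j _. destruct (Nat.eqb j k); lra.
  - rewrite (Rsum_ext _ _ (fun j => (if Nat.eqb j k then 1 else 0) * 1)) by (intros; ring).
    apply Rsum_pick. auto.
  - intros i Hi. rewrite (Rsum_pick _ k (fun j => nth j (gens A) (fun _ => 0) i)) by auto.
    rewrite gens_nth, Hka. reflexivity.
Qed.

Lemma dot_comb n m (w p : pt) (mu : nat -> R) (G : nat -> pt) :
  (forall i, (i < n)%nat -> p i = Rsum m (fun j => mu j * G j i)) ->
  dot n w p = Rsum m (fun j => mu j * dot n w (G j)).
Proof.
  intro H. unfold dot.
  rewrite (Rsum_ext n _ (fun i => Rsum m (fun j => w i * (mu j * G j i)))).
  - rewrite Rsum_swap. apply Rsum_ext. intros j _. rewrite <- Rsum_scal. apply Rsum_ext.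
    intros; ring.
  - intros i Hi. rewrite H by auto. rewrite <- Rsum_scal. reflexivity.
Qed.

Lemma inNew_le n A (w : pt) c p :
  (forall g, In g (zero_exp :: A) -> dot n w (toR g) <= c) -> inNew n A p -> dot n w p <= c.
Proof.
  intros Hg [mu [Hmu1 [Hmu2 Hmu3]]].
  rewrite (dot_comb n _ w p mu (fun j => nth j (gens A) (fun _ => 0))) by auto.
  rewrite <- (Rmult_1_r c), <- Hmu2, <- Rsum_scal.
  apply Rsum_le. intros j Hj. rewrite gens_nth.
  assert (dot n w (toR (nth j (zero_exp :: A) zero_exp)) <= c).
  { apply Hg. apply nth_In. rewrite gens_len in Hj. auto. }
  specialize (Hmu1 j Hj). nra.
Qed.

Lemma dot_zero n w : dot n w (toR zero_exp) = 0.
Proof. unfold dot. apply Rsum_zero. intros. unfold toR, zero_exp. simpl. ring. Qed.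

Lemma dot_zero_exp n w a : (forall i, (i < n)%nat -> a i = 0%nat) -> dot n w (toR a) = 0.
Proof. intro H. unfold dot. apply Rsum_zero. intros. unfold toR. rewrite H by auto. simpl. ring. Qed.


Definition sq n (q : pt) := Rsum n (fun i => q i * q i).

Lemma list_lexmax {T} (L : list T) (f1 f2 : T -> R) : L <> [] ->
  exists p, In p L /\ forall g, In g L -> f1 g < f1 p \/ (f1 g = f1 p /\ f2 g <= f2 p).
Proof.
  induction L as [|a L IH]; intro H. congruence.
  destruct L as [|b L'].
  - exists a. split. simpl; auto. intros g [<-|[]]. right; split; lra.
  - destruct IH as [p [Hp Hg]]. congruence.
    destruct (classic (f1 a < f1 p \/ (f1 a = f1 p /\ f2 a <= f2 p))) as [Ha|Ha].
    + exists p. split. simpl; auto. intros g [<-|Hg']. auto. auto.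
    + exists a. split. simpl; auto. intros g [<-|Hg'].
      * right; split; lra.
      * specialize (Hg g Hg'). apply not_or_and in Ha. destruct Ha as [Ha1 Ha2].
        destruct (Rtotal_order (f1 a) (f1 p)) as [?|[?|?]].
        -- lra.
        -- assert (f2 p < f2 a) by (destruct (Rle_or_lt (f2 a) (f2 p)); [exfalso; apply Ha2; auto|auto]).
           destruct Hg as [?|[? ?]]. left; lra. right; split; lra.
        -- destruct Hg as [?|[? ?]]. left; lra. left; lra.
Qed.

Lemma jensen n m (mu : nat -> R) (G : nat -> pt) (y : pt) :
  (forall j, (j < m)%nat -> 0 <= mu j) -> Rsum m mu = 1 ->
  (forall i, (i < n)%nat -> y i = Rsum m (fun j => mu j * G j i)) ->
  sq n y <= Rsum m (fun j => mu j * sq n (G j)).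
Proof.
  intros Hmu Hs Hy. unfold sq.
  rewrite (Rsum_ext m _ (fun j => Rsum n (fun i => mu j * (G j i * G j i)))) by (intros; rewrite Rsum_scal; reflexivity).
  rewrite <- Rsum_swap. apply Rsum_le. intros i Hi.
  assert (0 <= Rsum m (fun j => mu j * ((G j i - y i) * (G j i - y i)))).
  { apply Rsum_nonneg. intros j Hj. apply Rmult_le_pos. auto. apply Rle_0_sqr. }
  rewrite (Rsum_ext m _ (fun j => (mu j * (G j i * G j i) - 2 * y i * (mu j * G j i)) + y i * y i * mu j)) in H by (intros; ring).
  rewrite Rsum_plus, Rsum_minus, !Rsum_scal, Hs, <- Hy in H by auto. lra.
Qed.

Lemma lex_vertex n A (w : pt) p : In p (zero_exp :: A) ->
  (forall g, In g (zero_exp :: A) -> dot n w (toR g) < dot n w (toR p) \/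
      (dot n w (toR g) = dot n w (toR p) /\ sq n (toR g) <= sq n (toR p))) ->
  is_vertex n A (toR p).
Proof.
  intros Hp Hlex.
  assert (Hle : forall g, In g (zero_exp :: A) -> dot n w (toR g) <= dot n w (toR p)).
  { intros g Hg. destruct (Hlex g Hg) as [?|[? ?]]; lra. }
  assert (Key : forall y, inNew n A y -> dot n w y <= dot n w (toR p) /\
              (dot n w y = dot n w (toR p) -> sq n y <= sq n (toR p))).
  { intros y Hy. split. apply (inNew_le n A); auto.
    intro Heq. destruct Hy as [mu [Hmu1 [Hmu2 Hmu3]]].
    set (G := fun j => nth j (gens A) (fun _ => 0)).
    pose proof (dot_comb n _ w y mu G Hmu3) as Hd.
    assert (Hz : forall j, (j < length (gens A))%nat -> mu j * (dot n w (toR p) - dot n w (G j)) = 0).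
    { apply Rsum_eq0.
      - intros j Hj. apply Rmult_le_pos. auto. unfold G. rewrite gens_nth.
        assert (dot n w (toR (nth j (zero_exp :: A) zero_exp)) <= dot n w (toR p)).
        { apply Hle. apply nth_In. rewrite gens_len in Hj; auto. } lra.
      - rewrite (Rsum_ext _ _ (fun j => dot n w (toR p) * mu j - mu j * dot n w (G j))) by (intros; ring).
        rewrite Rsum_minus, Rsum_scal, Hmu2, <- Hd. lra. }
    eapply Rle_trans. apply (jensen n (length (gens A)) mu G y); auto.
    rewrite <- (Rmult_1_r (sq n (toR p))), <- Hmu2, <- Rsum_scal.
    apply Rsum_le. intros j Hj. specialize (Hz j Hj). specialize (Hmu1 j Hj).
    destruct (Req_dec (mu j) 0) as [H0|H0]. rewrite H0. rewrite Rmult_0_l. unfold sq. rewrite Rmult_0_r. lra.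
    assert (dot n w (G j) = dot n w (toR p)).
    { apply Rmult_integral in Hz. destruct Hz. contradiction. lra. }
    unfold G in *. rewrite gens_nth in *.
    destruct (Hlex (nth j (zero_exp :: A) zero_exp)) as [?|[? ?]].
    apply nth_In. rewrite gens_len in Hj; auto. lra. nra. }
  split. apply inNew_gen; auto.
  intros y z t Hy Hz Ht Hc.
  destruct (Key y Hy) as [Ky1 Ky2]. destruct (Key z Hz) as [Kz1 Kz2].
  assert (Hdp : dot n w (toR p) = t * dot n w y + (1 - t) * dot n w z).
  { unfold dot. rewrite <- !Rsum_scal, <- Rsum_plus. apply Rsum_ext. intros i Hi. rewrite Hc by auto. ring. }
  assert (E1 : 0 <= t * (dot n w (toR p) - dot n w y)) by (apply Rmult_le_pos; lra).
  assert (E2 : 0 <= (1 - t) * (dot n w (toR p) - dot n w z)) by (apply Rmult_le_pos; lra).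
  assert (E3 : t * (dot n w (toR p) - dot n w y) = 0) by lra.
  assert (E4 : (1 - t) * (dot n w (toR p) - dot n w z) = 0) by lra.
  assert (Hdy : dot n w y = dot n w (toR p)).
  { apply Rmult_integral in E3. destruct E3; lra. }
  assert (Hdz : dot n w z = dot n w (toR p)).
  { apply Rmult_integral in E4. destruct E4; lra. }
  specialize (Ky2 Hdy). specialize (Kz2 Hdz).
  assert (Hsp : sq n (toR p) = t * sq n y + (1 - t) * sq n z - t * (1 - t) * Rsum n (fun i => (y i - z i) * (y i - z i))).
  { unfold sq. rewrite <- !Rsum_scal, <- Rsum_plus, <- Rsum_minus. apply Rsum_ext. intros i Hi. rewrite Hc by auto. ring. }
  assert (HD : 0 <= Rsum n (fun i => (y i - z i) * (y i - z i))) by (apply Rsum_nonneg; intros; apply Rle_0_sqr).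
  assert (HD0 : Rsum n (fun i => (y i - z i) * (y i - z i)) = 0).
  { assert (Htt : 0 < t * (1 - t)) by (apply Rmult_lt_0_compat; lra).
    assert (t * sq n y <= t * sq n (toR p)) by (apply Rmult_le_compat_l; lra).
    assert ((1-t) * sq n z <= (1-t) * sq n (toR p)) by (apply Rmult_le_compat_l; lra).
    assert (t * (1 - t) * Rsum n (fun i => (y i - z i) * (y i - z i)) <= 0) by lra.
    assert (0 <= t * (1 - t) * Rsum n (fun i => (y i - z i) * (y i - z i))) by (apply Rmult_le_pos; lra).
    assert (E : t * (1 - t) * Rsum n (fun i => (y i - z i) * (y i - z i)) = 0) by lra.
    apply Rmult_integral in E. destruct E; lra. }
  intros i Hi. pose proof (Rsum_eq0 n _ (fun j _ => Rle_0_sqr (y j - z j)) HD0 i Hi) as E.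
  cbv beta in E. apply Rmult_integral in E. destruct E; lra.
Qed.

Lemma exists_vertex_max n A (w : pt) : exists p, In p (zero_exp :: A) /\
  (forall g, In g (zero_exp :: A) -> dot n w (toR g) <= dot n w (toR p)) /\ inV0 n A p.
Proof.
  destruct (list_lexmax (zero_exp :: A) (fun g => dot n w (toR g)) (fun g => sq n (toR g))) as [p [Hp Hg]].
  congruence.
  exists p. split; auto. split.
  - intros g H. destruct (Hg g H) as [?|[? ?]]; lra.
  - split; auto. apply (lex_vertex n A w); auto.
Qed.


Lemma decP_true (P : Prop) : P -> decP P = true.
Proof. intro H. unfold decP. destruct (excluded_middle_informative P); [reflexivity|contradiction]. Qed.
Lemma decP_spec (P : Prop) : decP P = true -> P.
Proof. unfold decP. destruct (excluded_middle_informative P); [auto|discriminate]. Qed.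
Lemma decP_false (P : Prop) : ~ P -> decP P = false.
Proof. intro H. unfold decP. destruct (excluded_middle_informative P); [contradiction|reflexivity]. Qed.

Lemma dotS d y u : dot (S d) y u = dot d y u + y d * u d.
Proof. unfold dot. rewrite Rsum_S. reflexivity. Qed.

Lemma dot_ext d y u v : (forall i, (i < d)%nat -> u i = v i) -> dot d y u = dot d y v.
Proof. intro H. unfold dot. apply Rsum_ext. intros. rewrite H; auto. Qed.

Ltac simpl_ifs := repeat match goal with
  | |- context [Nat.ltb ?a ?b] => destruct (Nat.ltb_spec a b)
  | |- context [Nat.eqb ?a ?b] => destruct (Nat.eqb_spec a b)
  end; try lia; try reflexivity.

Definition V0L n A := filter (fun b => decP (inV0 n A b)) (zero_exp :: A).

Lemma KM n A a : In a (zero_exp :: A) ->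
  exists mu : nat -> R, (forall j, (j < length (V0L n A))%nat -> 0 <= mu j) /\
   (forall i, (i < n)%nat -> INR (a i) = Rsum (length (V0L n A)) (fun j => mu j * INR (nth j (V0L n A) zero_exp i))) /\
   Rsum (length (V0L n A)) mu = 1.
Proof.
  intro Ha. set (L := V0L n A). set (k := length L).
  set (C := fun j => fun i => if Nat.ltb i n then INR (nth j L zero_exp i) else 1).
  set (b := fun i => if Nat.ltb i n then INR (a i) else 1).
  destruct (farkas (S n) k C b) as [[mu [H1 H2]]|[y [Hy1 Hy2]]].
  - exists mu. split; auto. split.
    + intros i Hi. specialize (H2 i ltac:(lia)). unfold C, b in H2.
      destruct (Nat.ltb_spec i n); try lia. auto.
    + specialize (H2 n ltac:(lia)). unfold C, b in H2. destruct (Nat.ltb_spec n n); try lia.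
      rewrite <- H2. apply Rsum_ext. intros; ring.
  - exfalso.
    set (w := fun i => - y i).
    destruct (exists_vertex_max n A w) as [p [Hp [Hmax Hv]]].
    assert (HpL : In p L). { apply filter_In. split; auto. apply decP_true; auto. }
    apply In_nth with (d := zero_exp) in HpL. destruct HpL as [j [Hj Hpj]].
    specialize (Hy1 j Hj). rewrite dotS in Hy1. rewrite dotS in Hy2.
    assert (E1 : dot n y (C j) = dot n y (toR p)).
    { apply dot_ext. intros i Hi. unfold C, toR. destruct (Nat.ltb_spec i n); try lia. rewrite Hpj. auto. }
    assert (E2 : dot n y b = dot n y (toR a)).
    { apply dot_ext. intros i Hi. unfold b, toR. destruct (Nat.ltb_spec i n); try lia. auto. }
    assert (E3 : C j n = 1) by (unfold C; destruct (Nat.ltb_spec n n); try lia; auto).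
    assert (E4 : b n = 1) by (unfold b; destruct (Nat.ltb_spec n n); try lia; auto).
    assert (Ew : forall u, dot n w u = - dot n y u).
    { intro u. unfold dot, w. rewrite (Rsum_ext _ _ (fun i => -1 * (y i * u i))) by (intros; ring).
      rewrite Rsum_scal. ring. }
    specialize (Hmax a Ha). rewrite !Ew in Hmax. rewrite E1, E3 in Hy1. rewrite E2, E4 in Hy2. lra.
Qed.

Lemma nondeg_rep n A beta : In beta A -> ~ inV n A beta -> ~ gem_degenerate n A beta ->
  exists mu : nat -> R, (forall j, (j < length A)%nat -> 0 <= mu j) /\
   (forall i, (i < n)%nat -> INR (beta i) = Rsum (length A) (fun j => mu j * INR (nth j A zero_exp i))) /\
   Rsum (length A) mu < 1.
Proof.
  intros HbA HnV HnD.
  apply NNPP. intro Hno.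
  set (m := length A).
  set (C := fun j => fun i =>
     if Nat.ltb j m then (if Nat.ltb i n then INR (nth j A zero_exp i) else if Nat.eqb i n then 1 else 0)
     else if Nat.eqb j m then (if Nat.ltb i n then 0 else 1)
     else (if Nat.ltb i n then - INR (beta i) else if Nat.eqb i n then -1 else 0)).
  set (b := fun i => if Nat.eqb i (S n) then 1 else 0).
  destruct (farkas (S (S n)) (S (S m)) C b) as [[mu [H1 H2]]|[y [Hy1 Hy2]]].
  - apply Hno.
    assert (Rn1 := H2 (S n) ltac:(lia)). assert (Rn := H2 n ltac:(lia)).
    rewrite !Rsum_S in Rn1, Rn.
    assert (Z1 : Rsum m (fun j => mu j * C j (S n)) = 0).
    { apply Rsum_zero. intros j Hj. unfold C. simpl_ifs. ring. }
    assert (Z2 : Rsum m (fun j => mu j * C j n) = Rsum m mu).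
    { apply Rsum_ext. intros j Hj. unfold C. simpl_ifs. ring. }
    assert (V1 : C m (S n) = 1) by (unfold C; simpl_ifs).
    assert (V2 : C (S m) (S n) = 0) by (unfold C; simpl_ifs).
    assert (V3 : C m n = 1) by (unfold C; simpl_ifs).
    assert (V4 : C (S m) n = -1) by (unfold C; simpl_ifs).
    assert (V5 : b (S n) = 1) by (unfold b; simpl_ifs).
    assert (V6 : b n = 0) by (unfold b; simpl_ifs).
    rewrite Z1, V1, V2, V5 in Rn1. rewrite Z2, V3, V4, V6 in Rn.
    set (t := mu (S m)) in *.
    assert (Hm0 : 0 <= Rsum m mu) by (apply Rsum_nonneg; intros; apply H1; lia).
    assert (Ht : 0 < t) by lra.
    exists (fun j => mu j / t). split; [|split].
    + intros j Hj. unfold Rdiv. apply Rmult_le_pos. apply H1; lia. left. apply Rinv_0_lt_compat; auto.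
    + intros i Hi. specialize (H2 i ltac:(lia)). rewrite !Rsum_S in H2.
      assert (Z3 : Rsum m (fun j => mu j * C j i) = Rsum m (fun j => mu j * INR (nth j A zero_exp i))).
      { apply Rsum_ext. intros j Hj. unfold C. simpl_ifs. }
      assert (V7 : C m i = 0) by (unfold C; simpl_ifs).
      assert (V8 : C (S m) i = - INR (beta i)) by (unfold C; simpl_ifs).
      assert (V9 : b i = 0) by (unfold b; simpl_ifs).
      rewrite Z3, V7, V8, V9 in H2. fold t in H2.
      rewrite (Rsum_ext _ _ (fun j => / t * (mu j * INR (nth j A zero_exp i)))) by (intros; unfold Rdiv; ring).
      rewrite Rsum_scal. fold m. replace (Rsum m (fun j : nat => mu j * INR (nth j A zero_exp i))) with (t * INR (beta i)) by lra. field. lra.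
    + rewrite (Rsum_ext _ _ (fun j => / t * mu j)) by (intros; unfold Rdiv; ring).
      rewrite Rsum_scal. apply (Rmult_lt_reg_l t). auto. fold m. rewrite <- Rmult_assoc, Rinv_r, Rmult_1_l by lra. lra.
  - apply HnD. split; auto. split; auto.
    assert (Edot : forall u, dot (S (S n)) y u = dot n y u + y n * u n + y (S n) * u (S n)).
    { intro u. rewrite !dotS. ring. }
    rewrite Edot in Hy2.
    assert (Eb : dot n y b = 0) by (unfold dot; apply Rsum_zero; intros; unfold b; simpl_ifs; ring).
    unfold b in Hy2 at 2 3. revert Hy2. simpl_ifs. rewrite Eb. intro Hy2.
    assert (Hs := Hy1 m ltac:(lia)). rewrite Edot in Hs. unfold C in Hs at 2 3. revert Hs. simpl_ifs.
    assert (Es : dot n y (C m) = 0) by (unfold dot; apply Rsum_zero; intros; unfold C; simpl_ifs; ring).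
    rewrite Es. intro Hs.
    assert (Htc := Hy1 (S m) ltac:(lia)). rewrite Edot in Htc. unfold C in Htc at 2 3. revert Htc. simpl_ifs.
    assert (Et : dot n y (C (S m)) = - dot n y (toR beta)).
    { unfold dot. rewrite (Rsum_ext _ _ (fun i => -1 * (y i * toR beta i))) by (intros; unfold C, toR; simpl_ifs; ring).
      rewrite Rsum_scal. ring. }
    rewrite Et. intro Htc.
    assert (Hyn : 0 < y n) by lra.
    set (v := fun i => - y i / y n).
    assert (Ev : forall u, dot n v u = - dot n y u / y n).
    { intro u. unfold dot, v. rewrite (Rsum_ext _ _ (fun i => (-1 / y n) * (y i * u i))) by (intros; field; lra).
      rewrite Rsum_scal. field. lra. }
    assert (Hg : forall g, In g (zero_exp :: A) -> dot n v (toR g) <= 1).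
    { intros g [<-|Hg]. rewrite dot_zero. lra.
      apply In_nth with (d := zero_exp) in Hg. destruct Hg as [j [Hj <-]].
      assert (Hc := Hy1 j ltac:(fold m in Hj; lia)). rewrite Edot in Hc. unfold C in Hc at 2 3. revert Hc.
      fold m in Hj. simpl_ifs.
      assert (Ej : dot n y (C j) = dot n y (toR (nth j A zero_exp))).
      { apply dot_ext. intros i Hi. unfold C, toR. simpl_ifs. }
      rewrite Ej. intro Hc. rewrite Ev. apply (Rmult_le_reg_l (y n)); auto. field_simplify; lra. }
    assert (Hb1 : 1 <= dot n v (toR beta)).
    { rewrite Ev. apply (Rmult_le_reg_l (y n)); auto. field_simplify; lra. }
    exists (fun q => inNew n A q /\ dot n v q = 1). split; [split|split].
    + exists v, 1. split. intros q Hq. apply (inNew_le n A); auto. intro q. tauto.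
    + split. exists (toR beta). split. apply inNew_gen; simpl; auto.
      assert (dot n v (toR beta) <= 1) by (apply Hg; simpl; auto). lra.
      intros [_ Hq0]. rewrite dot_zero in Hq0. lra.
    + apply inNew_gen; simpl; auto.
    + assert (dot n v (toR beta) <= 1) by (apply Hg; simpl; auto). lra.
Qed.

Lemma W_inV n A (lam : expo -> expo -> R) s W G : inGcal n A G -> G (toR s) ->
  (forall a, In a W -> inV0 n A a) -> (forall a, In a W -> lam s a > 0) ->
  (forall i, (i < n)%nat -> Rsum (length W) (fun j => lam s (nth j W zero_exp) * INR (nth j W zero_exp i)) = INR (s i)) ->
  Rsum (length W) (fun j => lam s (nth j W zero_exp)) = 1 ->
  forall a, In a W -> inV n A a.
Proof.
  intros [[w [c [Hsup Hiff]]] [_ HG0]] HGs HV Hpos Hco Hsum.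
  apply Hiff in HGs. destruct HGs as [_ Hds].
  assert (Hd := dot_comb n (length W) w (toR s) (fun j => lam s (nth j W zero_exp))
                (fun j => toR (nth j W zero_exp)) ltac:(intros; unfold toR; rewrite Hco; auto)).
  assert (Hz : forall j, (j < length W)%nat -> lam s (nth j W zero_exp) * (c - dot n w (toR (nth j W zero_exp))) = 0).
  { apply Rsum_eq0.
    - intros j Hj. apply Rmult_le_pos. left. apply Hpos. apply nth_In; auto.
      assert (dot n w (toR (nth j W zero_exp)) <= c).
      { apply Hsup. destruct (HV (nth j W zero_exp)) as [_ [Hn _]]. apply nth_In; auto. auto. }
      lra.
    - rewrite (Rsum_ext _ _ (fun j => c * lam s (nth j W zero_exp) - lam s (nth j W zero_exp) * dot n w (toR (nth j W zero_exp)))) by (intros; ring).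
      rewrite Rsum_minus, Rsum_scal, Hsum, <- Hd. lra. }
  intros a Ha. split. auto.
  apply NNPP. intro Hnz. apply HG0. apply Hiff. split. apply inNew_gen. simpl; auto.
  rewrite dot_zero.
  apply In_nth with (d := zero_exp) in Ha. destruct Ha as [j [Hj Haj]].
  specialize (Hz j Hj). rewrite Haj in Hz.
  assert (dot n w (toR a) = 0).
  { apply dot_zero_exp. intros i Hi. apply NNPP. intro. apply Hnz. exists i. auto. }
  assert (lam s a > 0) by (apply Hpos; rewrite <- Haj; apply nth_In; auto).
  apply Rmult_integral in Hz. destruct Hz; lra.
Qed.


Lemma Rprod_shift m g : Rprod (S m) g = g 0%nat * Rprod m (fun j => g (S j)).
Proof.
  unfold Rprod. simpl. f_equal. rewrite <- seq_shift, map_map. reflexivity.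
Qed.

Lemma Rprod_S m g : Rprod (S m) g = Rprod m g * g m.
Proof.
  revert g; induction m; intro g.
  - rewrite Rprod_shift. unfold Rprod; simpl. lra.
  - rewrite Rprod_shift, IHm, Rprod_shift. lra.
Qed.

Definition mon n (a : expo) (x : pt) := Rprod n (fun i => Rabs (x i) ^ a i).

Lemma mon_nonneg n a x : 0 <= mon n a x.
Proof.
  unfold mon. induction n. unfold Rprod; simpl; lra.
  rewrite Rprod_S. apply Rmult_le_pos; auto. apply pow_le. apply Rabs_pos.
Qed.

Lemma mon_zero n a x : (exists i, (i < n)%nat /\ (a i > 0)%nat /\ x i = 0) -> mon n a x = 0.
Proof.
  intros [k [Hk [Ha Hx]]]. unfold mon. induction n. lia.
  rewrite Rprod_S. destruct (Nat.eq_dec k n).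
  - subst. rewrite Hx, Rabs_R0, pow_i by lia. ring.
  - rewrite IHn by lia. ring.
Qed.

Lemma mon_exp n a x : (forall i, (i < n)%nat -> (a i > 0)%nat -> x i <> 0) ->
  mon n a x = exp (Rsum n (fun i => INR (a i) * ln (Rabs (x i)))).
Proof.
  intro H. unfold mon. induction n.
  - unfold Rprod, Rsum; simpl. rewrite exp_0. reflexivity.
  - rewrite Rprod_S, Rsum_S, exp_plus, IHn by (intros; apply H; lia). f_equal.
    destruct (a n) eqn:E.
    + simpl. rewrite Rmult_0_l, exp_0. reflexivity.
    + assert (0 < Rabs (x n)) by (apply Rabs_pos_lt; apply H; lia).
      rewrite <- (Rpower_pow (S n0)) by auto. reflexivity.
Qed.

Lemma exp_le_mono a b : a <= b -> exp a <= exp b.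
Proof. intro H. destruct H. left; apply exp_increasing; auto. subst; lra. Qed.

Lemma ln_le_mono a b : 0 < a -> a <= b -> ln a <= ln b.
Proof. intros H1 H2. destruct H2. left; apply ln_increasing; auto. subst; lra. Qed.

Lemma ln_le_sub1 z : 0 < z -> ln z <= z - 1.
Proof. intro H. pose proof (exp_ineq1_le (ln z)). rewrite exp_ln in H0 by auto. lra. Qed.

Lemma supp_sub n m (G : nat -> expo) (mu : nat -> R) (b : expo) j :
  (forall j, (j < m)%nat -> 0 <= mu j) ->
  (forall i, (i < n)%nat -> INR (b i) = Rsum m (fun j => mu j * INR (G j i))) ->
  (j < m)%nat -> 0 < mu j -> forall i, (i < n)%nat -> (G j i > 0)%nat -> (b i > 0)%nat.
Proof.
  intros Hmu Hb Hj Hpos i Hi HG. apply INR_lt. simpl. rewrite Hb by auto.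
  eapply Rlt_le_trans; [|apply (Rsum_ge_term m (fun j => mu j * INR (G j i)) j Hj)].
  - apply Rmult_lt_0_compat; auto. apply lt_0_INR. lia.
  - intros. apply Rmult_le_pos; auto. apply pos_INR.
Qed.

Lemma mon_max n x m (G : nat -> expo) (mu : nat -> R) (b : expo) M sg :
  (forall j, (j < m)%nat -> 0 <= mu j) ->
  (forall i, (i < n)%nat -> INR (b i) = Rsum m (fun j => mu j * INR (G j i))) ->
  Rsum m mu = sg -> 0 < M -> (forall j, (j < m)%nat -> mon n (G j) x <= M) ->
  mon n b x <= Rpower M sg.
Proof.
  intros Hmu Hb Hs HM HG.
  destruct (classic (exists i, (i < n)%nat /\ (b i > 0)%nat /\ x i = 0)) as [Hz|Hz].
  { rewrite mon_zero by auto. unfold Rpower. left; apply exp_pos. }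
  assert (Hnz : forall i, (i < n)%nat -> (b i > 0)%nat -> x i <> 0).
  { intros i Hi Hbi Hx. apply Hz. exists i. auto. }
  rewrite mon_exp by auto. unfold Rpower. apply exp_le_mono.
  rewrite (Rsum_ext n _ (fun i => Rsum m (fun j => mu j * INR (G j i) * ln (Rabs (x i))))).
  2:{ intros i Hi. rewrite Hb by auto. rewrite Rsum_scal_r. reflexivity. }
  rewrite Rsum_swap. rewrite <- Hs, <- Rsum_scal_r. apply Rsum_le. intros j Hj.
  rewrite (Rsum_ext n _ (fun i => mu j * (INR (G j i) * ln (Rabs (x i))))) by (intros; ring).
  rewrite Rsum_scal.
  destruct (Hmu j Hj) as [Hp|H0]; [|rewrite <- H0; lra].
  apply Rmult_le_compat_l. lra.
  assert (Hsub := supp_sub n m G mu b j Hmu Hb Hj Hp).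
  specialize (HG j Hj). rewrite mon_exp in HG by (intros i Hi HGi; apply Hnz; auto).
  rewrite <- (ln_exp (Rsum n _)). apply ln_le_mono; auto. apply exp_pos.
Qed.

Lemma amgm n x m (G : nat -> expo) (l c : nat -> R) (s : expo) :
  (forall j, (j < m)%nat -> 0 < l j) -> (forall j, (j < m)%nat -> 0 < c j) -> Rsum m l = 1 ->
  (forall i, (i < n)%nat -> Rsum m (fun j => l j * INR (G j i)) = INR (s i)) ->
  exp (Rsum m (fun j => l j * ln (c j / l j))) * mon n s x <= Rsum m (fun j => c j * mon n (G j) x).
Proof.
  intros Hl Hc Hs Hco.
  assert (Hr : 0 <= Rsum m (fun j => c j * mon n (G j) x)).
  { apply Rsum_nonneg. intros. apply Rmult_le_pos. left; auto. apply mon_nonneg. }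
  destruct (classic (exists i, (i < n)%nat /\ (s i > 0)%nat /\ x i = 0)) as [Hz|Hz].
  { rewrite mon_zero by auto. lra. }
  assert (Hnz : forall i, (i < n)%nat -> (s i > 0)%nat -> x i <> 0).
  { intros i Hi Hbi Hx. apply Hz. exists i. auto. }
  assert (Hb : forall i, (i < n)%nat -> INR (s i) = Rsum m (fun j => l j * INR (G j i))) by (intros; rewrite Hco; auto).
  set (g := fun j => Rsum n (fun i => INR (G j i) * ln (Rabs (x i)))).
  assert (HmG : forall j, (j < m)%nat -> mon n (G j) x = exp (g j)).
  { intros j Hj. apply mon_exp. intros i Hi HGi. apply Hnz; auto.
    apply (supp_sub n m G l s j); auto. intros; left; auto. }
  rewrite mon_exp by auto.
  assert (Hsg : Rsum n (fun i => INR (s i) * ln (Rabs (x i))) = Rsum m (fun j => l j * g j)).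
  { rewrite (Rsum_ext n _ (fun i => Rsum m (fun j => l j * INR (G j i) * ln (Rabs (x i))))).
    2:{ intros i Hi. rewrite Hb by auto. rewrite Rsum_scal_r. reflexivity. }
    rewrite Rsum_swap. apply Rsum_ext. intros j Hj. unfold g. rewrite <- Rsum_scal. apply Rsum_ext. intros; ring. }
  rewrite Hsg, <- exp_plus, <- Rsum_plus.
  set (y := fun j => c j / l j * exp (g j)).
  assert (Hy : forall j, (j < m)%nat -> 0 < y j).
  { intros j Hj. unfold y. apply Rmult_lt_0_compat. apply Rdiv_lt_0_compat; auto. apply exp_pos. }
  assert (HT : Rsum m (fun j => c j * mon n (G j) x) = Rsum m (fun j => l j * y j)).
  { apply Rsum_ext. intros j Hj. rewrite HmG by auto. unfold y. field. specialize (Hl j Hj). lra. }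
  rewrite HT. set (T := Rsum m (fun j => l j * y j)).
  assert (HmP : (0 < m)%nat) by (destruct m; [rewrite Rsum_0 in Hs; lra| lia]).
  assert (HTp : 0 < T).
  { unfold T. eapply Rlt_le_trans; [|apply (Rsum_ge_term m _ 0%nat HmP)].
    apply Rmult_lt_0_compat; auto. intros. apply Rmult_le_pos; left; auto. }
  rewrite <- (exp_ln T) by auto. apply exp_le_mono.
  rewrite (Rsum_ext m _ (fun j => l j * ln (y j))).
  2:{ intros j Hj. unfold y. rewrite ln_mult, ln_exp. ring. apply Rdiv_lt_0_compat; auto. apply exp_pos. }
  assert (Hk : Rsum m (fun j => l j * (ln (y j) - ln T)) <= Rsum m (fun j => l j * (y j / T - 1))).
  { apply Rsum_le. intros j Hj. apply Rmult_le_compat_l. left; auto.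
    assert (0 < / T) by (apply Rinv_0_lt_compat; auto).
    replace (ln (y j) - ln T) with (ln (y j / T)).
    2:{ unfold Rdiv. rewrite ln_mult by auto. rewrite ln_Rinv by auto. ring. } apply ln_le_sub1. apply Rdiv_lt_0_compat; auto. }
  rewrite (Rsum_ext m (fun j => l j * (ln (y j) - ln T)) (fun j => l j * ln (y j) - ln T * l j)) in Hk by (intros; ring).
  rewrite (Rsum_ext m (fun j => l j * (y j / T - 1)) (fun j => / T * (l j * y j) - l j)) in Hk by (intros; field; lra).
  rewrite !Rsum_minus, !Rsum_scal, Hs in Hk. fold T in Hk. rewrite Rinv_l in Hk by lra. lra.
Qed.


Lemma nzb_iff n a : nzb n a = true <-> Defs.nonzero n a.
Proof.
  unfold nzb, nonzero. rewrite existsb_exists. split.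
  - intros [i [Hin Hb]]. apply in_seq in Hin. exists i. split. lia.
    intro H. rewrite H in Hb. simpl in Hb. discriminate.
  - intros [i [Hi Ha]]. exists i. split. apply in_seq. lia.
    destruct (Nat.eqb_spec (a i) 0). contradiction. reflexivity.
Qed.

Lemma inV_inA n A a : inV n A a -> In a A.
Proof.
  intros [[Hin _] [i [Hi Hai]]]. destruct Hin as [<-|H]; auto. exfalso; apply Hai; reflexivity.
Qed.

Lemma Theta_eq n A coef (lam : expo -> expo -> R) s W : NoDup A -> NoDup W ->
  (forall a, In a W -> inV n A a) -> (forall a, In a W -> lam s a > 0) ->
  (forall a, inV0 n A a -> ~ In a W -> lam s a = 0) ->
  Theta n A coef lam s = exp (Rsum (length W) (fun j => lam s (nth j W zero_exp) * ln (coef (nth j W zero_exp) / lam s (nth j W zero_exp)))).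
Proof.
  intros HA HW HV Hp H0.
  unfold Theta. rewrite prod_if_exp. f_equal. unfold gens_exp. rewrite lsum_cons.
  rewrite (decP_false (inV0 n A zero_exp /\ lam s zero_exp > 0)).
  2:{ intros [Hv Hl]. destruct (classic (In zero_exp W)) as [Hw|Hw].
      - destruct (HV _ Hw) as [_ [i [_ Hi]]]. apply Hi; reflexivity.
      - rewrite H0 in Hl by auto. lra. }
  rewrite Rplus_0_l.
  rewrite (lsum_filter _ (fun a => decP (inV0 n A a /\ lam s a > 0)) (fun a => lam s a * ln (coef a / lam s a))).
  rewrite (Rsum_list W zero_exp (fun a => lam s a * ln (coef a / lam s a))).
  apply lsum_perm. apply NoDup_Permutation.
  - apply NoDup_filter. apply NoDup_filter. auto.
  - auto.
  - intro a. rewrite !filter_In. split.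
    + intros [[HaA Hnz] Hd]. apply decP_spec in Hd. destruct Hd as [Hv Hl].
      apply NNPP. intro Hn. rewrite H0 in Hl by auto. lra.
    + intro Ha. destruct (HV a Ha) as [Hv0 Hnz]. split. split. apply (inV_inA n A). apply HV; auto.
      apply (proj2 (nzb_iff n a)); auto. apply decP_true. split; auto.
Qed.

Lemma gem_not_V0 n A a : gem_degenerate n A a -> ~ inV0 n A a.
Proof.
  intros [HaA [HnV [G [[[w [c [Hsup Hiff]]] [_ HG0]] HGa]]]] Hv0.
  apply HnV. split; auto. apply NNPP. intro Hnz. apply HG0.
  apply Hiff in HGa. destruct HGa as [_ Hd]. apply Hiff. split. apply inNew_gen; simpl; auto.
  rewrite dot_zero. rewrite <- Hd. symmetry. apply dot_zero_exp.
  intros i Hi. apply NNPP. intro. apply Hnz. exists i; auto.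
Qed.

Definition Sv n A coef x := lsum A (fun a => if decP (inV n A a) then coef a * mon n a x else 0).

Lemma Sv_nonneg n A coef x : condC2 n A coef -> 0 <= Sv n A coef x.
Proof.
  intro HC2. apply lsum_nonneg. intros a Ha. destruct (decP (inV n A a)) eqn:E.
  apply decP_spec in E. apply Rmult_le_pos. left; apply HC2; auto. apply mon_nonneg. lra.
Qed.

Lemma Sv_ge n A coef x a : condC2 n A coef -> inV n A a -> coef a * mon n a x <= Sv n A coef x.
Proof.
  intros HC2 Ha. unfold Sv.
  replace (coef a * mon n a x) with ((fun a => if decP (inV n A a) then coef a * mon n a x else 0) a)
    by (simpl; rewrite decP_true; auto).
  apply (lsum_ge_term A (fun a => if decP (inV n A a) then coef a * mon n a x else 0) a). apply (inV_inA n A); auto.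
  intros b Hb. destruct (decP (inV n A b)) eqn:E.
  apply decP_spec in E. apply Rmult_le_pos. left; apply HC2; auto. apply mon_nonneg. lra.
Qed.

Lemma gem_bound n A coef lam s x : wf_poly n A coef -> condC2 n A coef -> min_bary n A lam ->
  gem_degenerate n A s ->
  0 < Theta n A coef lam s /\ Theta n A coef lam s * mon n s x <= Sv n A coef x.
Proof.
  intros [HND [Hsupp [Hc1 Hc2]]] HC2 Hmb Hg.
  assert (Hnv0 := gem_not_V0 n A s Hg).
  destruct Hg as [HsA [HnV [G [HG HGs]]]] eqn:Hgg.
  destruct (Hmb s HsA Hnv0) as [_ [W [HWnd [HWv [_ [HWp [HW0 [HWco HWs]]]]]]]].
  assert (HWV := W_inV n A lam s W G HG HGs HWv HWp HWco HWs).
  rewrite (Theta_eq n A coef lam s W) by auto.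
  split. apply exp_pos.
  eapply Rle_trans.
  apply (amgm n x (length W) (fun j => nth j W zero_exp) (fun j => lam s (nth j W zero_exp)) (fun j => coef (nth j W zero_exp)) s).
  - intros j Hj. apply HWp. apply nth_In; auto.
  - intros j Hj. apply HC2. apply HWV. apply nth_In; auto.
  - auto.
  - auto.
  - rewrite (Rsum_list W zero_exp (fun a => coef a * mon n a x)).
    unfold Sv. rewrite (lsum_ext W _ (fun a => if decP (inV n A a) then coef a * mon n a x else 0)).
    apply lsum_sub; auto. intros a Ha. apply (inV_inA n A); auto.
    intros b Hb. destruct (decP (inV n A b)) eqn:E.
    apply decP_spec in E. apply Rmult_le_pos. left; apply HC2; auto. apply mon_nonneg. lra.
    intros a Ha. rewrite decP_true; auto.
Qed.


Lemma Rdiv_le_0_compat a b : 0 <= a -> 0 < b -> 0 <= a / b.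
Proof. intros. unfold Rdiv. apply Rmult_le_pos; auto. left; apply Rinv_0_lt_compat; auto. Qed.

Lemma Rprod_ext m g h : (forall j, (j < m)%nat -> g j = h j) -> Rprod m g = Rprod m h.
Proof.
  induction m; intro H. reflexivity.
  rewrite !Rprod_S, IHm by (intros; apply H; lia). rewrite H by lia. reflexivity.
Qed.

Lemma Rprod_single m k c : (k < m)%nat -> Rprod m (fun j => if Nat.eqb j k then c else 1) = c.
Proof.
  intro Hk. induction m. lia.
  rewrite Rprod_S. destruct (Nat.eq_dec k m).
  - subst. rewrite Nat.eqb_refl.
    rewrite (Rprod_ext m _ (fun _ => 1)).
    + replace (Rprod m (fun _ => 1)) with 1. lra. clear. induction m. reflexivity. rewrite Rprod_S, <- IHm. lra.
    + intros j Hj. destruct (Nat.eqb_spec j m). lia. reflexivity.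
  - rewrite IHm by lia. destruct (Nat.eqb_spec m k). lia. lra.
Qed.

Lemma mon_one n a x : (forall i, (i < n)%nat -> a i = 0%nat) -> mon n a x = 1.
Proof.
  intro H. unfold mon. induction n. reflexivity.
  rewrite Rprod_S, IHn by (intros; apply H; lia). rewrite H by lia. simpl. lra.
Qed.

Lemma c0_exists n A coef : condC2 n A coef ->
  exists c0, 0 < c0 /\ forall a, In a A -> inV n A a -> c0 <= coef a.
Proof.
  intro HC2. assert (G : forall L : list expo, exists c0, 0 < c0 /\ forall a, In a L -> inV n A a -> c0 <= coef a).
  2:{ apply G. }
  intro L. induction L as [|b L IH].
  - exists 1. split. lra. intros a [].
  - destruct IH as [c [Hc HL]]. destruct (classic (inV n A b)) as [Hb|Hb].
    + exists (Rmin c (coef b)). split. apply Rmin_pos; auto. apply HC2; auto.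
      intros a [<-|Ha] Hv. apply Rmin_r. eapply Rle_trans. apply Rmin_l. auto.
    + exists c. split; auto. intros a [<-|Ha] Hv. contradiction. auto.
Qed.

Lemma KM_bound n A coef c0 x a : condC2 n A coef -> 0 < c0 ->
  (forall a, In a A -> inV n A a -> c0 <= coef a) -> In a (zero_exp :: A) ->
  mon n a x <= 1 + Sv n A coef x / c0.
Proof.
  intros HC2 Hc0 Hc Ha.
  assert (HS := Sv_nonneg n A coef x HC2).
  assert (HB : 0 < 1 + Sv n A coef x / c0).
  { assert (0 <= Sv n A coef x / c0) by (apply Rdiv_le_0_compat; auto). lra. }
  destruct (KM n A a Ha) as [mu [H1 [H2 H3]]].
  rewrite <- (Rpower_1 (1 + Sv n A coef x / c0)) by auto.
  apply (mon_max n x (length (V0L n A)) (fun j => nth j (V0L n A) zero_exp) mu a); auto.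
  intros j Hj. set (v := nth j (V0L n A) zero_exp).
  assert (Hv : In v (V0L n A)) by (apply nth_In; auto).
  unfold V0L in Hv. apply filter_In in Hv. destruct Hv as [_ Hv]. apply decP_spec in Hv.
  destruct (classic (Defs.nonzero n v)) as [Hnz|Hnz].
  - assert (HvV : inV n A v) by (split; auto).
    assert (coef v * mon n v x <= Sv n A coef x) by (apply Sv_ge; auto).
    assert (c0 <= coef v) by (apply Hc; auto; apply (inV_inA n A); auto).
    assert (0 <= mon n v x) by apply mon_nonneg.
    assert (c0 * mon n v x <= Sv n A coef x) by nra.
    assert (mon n v x <= Sv n A coef x / c0).
    { apply (Rmult_le_reg_l c0); auto. field_simplify; lra. }
    lra.
  - rewrite mon_one. assert (0 <= Sv n A coef x / c0) by (apply Rdiv_le_0_compat; auto). lra.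
    intros i Hi. apply NNPP. intro. apply Hnz. exists i. auto.
Qed.

Lemma young sg eps : 0 <= sg < 1 -> 0 < eps ->
  exists Z, forall B, 1 <= B -> Rpower B sg <= eps * B + Z.
Proof.
  intros Hs He. set (T := Rpower eps (- / (1 - sg))).
  assert (HT : 0 < T) by (unfold T, Rpower; apply exp_pos).
  exists T. intros B HB.
  destruct (Rle_or_lt B T) as [H|H].
  - assert (Rpower B sg <= Rpower B 1) by (apply Rle_Rpower; lra).
    rewrite Rpower_1 in H0 by lra. nra.
  - replace sg with (1 + (sg - 1)) by ring. rewrite Rpower_plus, Rpower_1 by lra.
    assert (Rpower B (sg - 1) <= Rpower T (sg - 1)).
    { unfold Rpower. apply exp_le_mono. apply Rmult_le_compat_neg_l. lra.
      apply ln_le_mono; lra. }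
    assert (Rpower T (sg - 1) = eps).
    { unfold T. rewrite Rpower_mult. replace (- / (1 - sg) * (sg - 1)) with 1 by (field; lra).
      apply Rpower_1; auto. }
    nra.
Qed.

Definition Eterm n A coef (x : pt) a :=
  if decP (inV n A a) then 0 else if decP (gem_degenerate n A a) then 0 else Rabs (coef a) * mon n a x.

Lemma Eterm_elem n A coef c0 a : condC2 n A coef -> 0 < c0 ->
  (forall a, In a A -> inV n A a -> c0 <= coef a) -> In a A ->
  forall eps, 0 < eps -> exists Z, forall x, Eterm n A coef x a <= eps * (1 + Sv n A coef x / c0) + Z.
Proof.
  intros HC2 Hc0 Hc Ha eps He.
  assert (HB : forall x, 1 <= 1 + Sv n A coef x / c0).
  { intro x. assert (0 <= Sv n A coef x / c0) by (apply Rdiv_le_0_compat; auto; apply Sv_nonneg; auto). lra. }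
  unfold Eterm. destruct (decP (inV n A a)) eqn:E1.
  { exists 0. intro x. specialize (HB x). nra. }
  destruct (decP (gem_degenerate n A a)) eqn:E2.
  { exists 0. intro x. specialize (HB x). nra. }
  assert (HnV : ~ inV n A a) by (intro H; rewrite decP_true in E1; auto; discriminate).
  assert (HnG : ~ gem_degenerate n A a) by (intro H; rewrite decP_true in E2; auto; discriminate).
  destruct (nondeg_rep n A a Ha HnV HnG) as [mu [H1 [H2 H3]]].
  set (sg := Rsum (length A) mu).
  assert (Hsg : 0 <= sg < 1) by (split; auto; apply Rsum_nonneg; auto).
  set (ca := Rabs (coef a)).
  assert (Hca : 0 <= ca) by apply Rabs_pos.
  set (e' := eps / (ca + 1)).
  assert (He' : 0 < e') by (apply Rdiv_lt_0_compat; lra).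
  destruct (young sg e' Hsg He') as [Z HZ].
  exists (ca * Z). intro x. specialize (HB x).
  assert (Hm : mon n a x <= Rpower (1 + Sv n A coef x / c0) sg).
  { apply (mon_max n x (length A) (fun j => nth j A zero_exp) mu a); auto. lra.
    intros j Hj. apply (KM_bound n A coef c0); auto. right. apply nth_In; auto. }
  specialize (HZ _ HB).
  assert (ca * e' <= eps).
  { unfold e'. apply (Rmult_le_reg_l (ca + 1)). lra. field_simplify; nra. }
  assert (ca * mon n a x <= ca * (e' * (1 + Sv n A coef x / c0) + Z)) by (apply Rmult_le_compat_l; lra).
  nra.
Qed.

Lemma Eterm_list n A coef c0 : condC2 n A coef -> 0 < c0 ->
  (forall a, In a A -> inV n A a -> c0 <= coef a) ->
  forall L, incl L A -> forall eps, 0 < eps -> exists Z, forall x,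
    lsum L (Eterm n A coef x) <= eps * (1 + Sv n A coef x / c0) + Z.
Proof.
  intros HC2 Hc0 Hc L. induction L as [|b L IH]; intros Hinc eps He.
  - exists 0. intro x. unfold lsum; simpl.
    assert (0 <= Sv n A coef x / c0) by (apply Rdiv_le_0_compat; auto; apply Sv_nonneg; auto). nra.
  - destruct (IH (fun a Ha => Hinc a (or_intror Ha)) (eps / 2) ltac:(lra)) as [Z1 HZ1].
    destruct (Eterm_elem n A coef c0 b HC2 Hc0 Hc (Hinc b (or_introl eq_refl)) (eps / 2) ltac:(lra)) as [Z2 HZ2].
    exists (Z1 + Z2). intro x. rewrite lsum_cons. specialize (HZ1 x). specialize (HZ2 x). lra.
Qed.


Lemma P_abs n a x : Rabs (Rprod n (fun i => x i ^ a i)) = mon n a x.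
Proof.
  unfold mon. induction n. unfold Rprod; simpl; apply Rabs_R1.
  rewrite !Rprod_S, Rabs_mult, IHn, RPow_abs. reflexivity.
Qed.

Lemma P_even n a x : all_even n a = true -> Rprod n (fun i => x i ^ a i) = mon n a x.
Proof.
  intro H. unfold mon. apply Rprod_ext. intros i Hi.
  unfold all_even in H. rewrite forallb_forall in H.
  assert (He : Nat.even (a i) = true) by (apply H; apply in_seq; lia).
  apply Nat.even_spec in He. destruct He as [k Hk]. rewrite Hk, !pow_mult, pow2_abs. reflexivity.
Qed.

Definition gterm n A coef lam s :=
  if decP (gem_degenerate n A s) then
    (if all_even n s then - (Rmin 0 (coef s) / Theta n A coef lam s) else Rabs (coef s) / Theta n A coef lam s)
  else 0.

Lemma lsum_scal_r {T} (L : list T) c h : lsum L (fun a => h a * c) = lsum L h * c.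
Proof. rewrite (lsum_ext L _ (fun a => c * h a)) by (intros; ring). rewrite lsum_scal. ring. Qed.

Lemma eval_lower n A coef lam x : wf_poly n A coef -> condC1 n A -> condC2 n A coef -> min_bary n A lam ->
  (1 - gem_sum n A coef lam) * Sv n A coef x - lsum A (Eterm n A coef x) <= eval n A coef x.
Proof.
  intros Hwf HC1 HC2 Hmb.
  change (eval n A coef x) with (lsum A (fun a => coef a * Rprod n (fun i => x i ^ a i))).
  change (gem_sum n A coef lam) with (lsum A (gterm n A coef lam)).
  set (Sx := Sv n A coef x).
  assert (Hper : forall a, In a A ->
    (if decP (inV n A a) then coef a * mon n a x else 0) - gterm n A coef lam a * Sx - Eterm n A coef x a
    <= coef a * Rprod n (fun i => x i ^ a i)).
  { intros a Ha. unfold gterm, Eterm.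
    assert (Hlow : - (Rabs (coef a) * mon n a x) <= coef a * Rprod n (fun i => x i ^ a i)).
    { rewrite <- P_abs, <- Rabs_mult. pose proof (Rle_abs (- (coef a * Rprod n (fun i => x i ^ a i)))).
      rewrite Rabs_Ropp in H. lra. }
    destruct (decP (inV n A a)) eqn:E1.
    - apply decP_spec in E1.
      rewrite (decP_false (gem_degenerate n A a)) by (intros [_ [H _]]; auto).
      rewrite P_even by (apply HC1; auto). lra.
    - destruct (decP (gem_degenerate n A a)) eqn:E2; [|lra].
      apply decP_spec in E2.
      destruct (gem_bound n A coef lam a x Hwf HC2 Hmb E2) as [Ht Hb].
      set (Th := Theta n A coef lam a) in *.
      assert (Hm := mon_nonneg n a x).
      destruct (all_even n a) eqn:E3.
      + rewrite P_even by auto.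
        assert (Hr1 : Rmin 0 (coef a) <= coef a) by apply Rmin_r.
        assert (Hr2 : Rmin 0 (coef a) <= 0) by apply Rmin_l.
        assert (coef a * mon n a x >= Rmin 0 (coef a) * mon n a x) by nra.
        assert (Rmin 0 (coef a) / Th <= 0).
        { unfold Rdiv. assert (0 < / Th) by (apply Rinv_0_lt_compat; auto). nra. }
        assert (Rmin 0 (coef a) * mon n a x = Rmin 0 (coef a) / Th * (Th * mon n a x)) by (field; lra).
        assert (Rmin 0 (coef a) / Th * (Th * mon n a x) >= Rmin 0 (coef a) / Th * Sx) by (apply Rle_ge; apply Rmult_le_compat_neg_l; auto).
        lra.
      + assert (0 <= Rabs (coef a) / Th) by (apply Rdiv_le_0_compat; auto; apply Rabs_pos).
        assert (Rabs (coef a) * mon n a x = Rabs (coef a) / Th * (Th * mon n a x)) by (field; lra).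
        assert (Rabs (coef a) / Th * (Th * mon n a x) <= Rabs (coef a) / Th * Sx) by (apply Rmult_le_compat_l; auto).
        lra. }
  eapply Rle_trans; [|apply lsum_le; exact Hper].
  rewrite !lsum_minus, lsum_scal_r. change (lsum A (fun a : expo => if decP (inV n A a) then coef a * mon n a x else 0)) with Sx. lra.
Qed.

Lemma S_large n A coef c0 x i : condC3 n A -> condC2 n A coef ->
  (forall a, In a A -> inV n A a -> c0 <= coef a) -> 0 < c0 ->
  (i < n)%nat -> 1 <= x i ^ 2 -> c0 * x i ^ 2 <= Sv n A coef x.
Proof.
  intros HC3 HC2 Hc Hc0 Hi Hx.
  destruct (HC3 i Hi) as [k [Hk [a [Hv [Hai Haj]]]]].
  assert (HS := Sv_ge n A coef x a HC2 Hv).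
  assert (Hca : c0 <= coef a) by (apply Hc; auto; apply (inV_inA n A); auto).
  assert (Hmon : mon n a x = Rabs (x i) ^ (2 * k)).
  { unfold mon. rewrite <- (Rprod_single n i (Rabs (x i) ^ (2 * k))) by auto.
    apply Rprod_ext. intros j Hj. destruct (Nat.eqb_spec j i).
    - subst. rewrite Hai. reflexivity.
    - rewrite Haj by auto. reflexivity. }
  assert (H1 : 1 <= Rabs (x i)).
  { rewrite <- pow2_abs in Hx. assert (0 <= Rabs (x i)) by apply Rabs_pos.
    destruct (Rle_or_lt 1 (Rabs (x i))); auto. simpl in Hx. nra. }
  assert (Rabs (x i) ^ 2 <= Rabs (x i) ^ (2 * k)) by (apply Rle_pow; auto; lia).
  rewrite pow2_abs in H. rewrite <- Hmon in H.
  assert (0 <= mon n a x) by apply mon_nonneg.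
  assert (c0 * x i ^ 2 <= coef a * mon n a x).
  { apply Rle_trans with (c0 * mon n a x). apply Rmult_le_compat_l; lra. apply Rmult_le_compat_r; lra. }
  lra.
Qed.

Lemma Rsum_const m c : Rsum m (fun _ => c) = INR m * c.
Proof. induction m. rewrite Rsum_0. simpl. ring. rewrite Rsum_S, IHm, S_INR. ring. Qed.

Theorem mainTheorem3 (n : nat) (A : list expo) (coef : expo -> R)
  (lam : expo -> expo -> R) :
  wf_poly n A coef ->
  condC1 n A -> condC2 n A coef -> condC3 n A ->
  min_bary n A lam ->
  gem_sum n A coef lam < 1 ->
  coercive n A coef.
Proof.
  intros Hwf HC1 HC2 HC3 Hmb Hgs M.
  destruct (c0_exists n A coef HC2) as [c0 [Hc0 Hc]].
  set (dl := 1 - gem_sum n A coef lam).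
  assert (Hdl : 0 < dl) by (unfold dl; lra).
  set (eps := dl * c0 / 2).
  assert (Heps : 0 < eps) by (unfold eps; apply Rdiv_lt_0_compat; [apply Rmult_lt_0_compat|]; lra).
  destruct (Eterm_list n A coef c0 HC2 Hc0 Hc A (incl_refl A) eps Heps) as [Z HZ].
  set (Q := Rmax 0 (2 * (M + eps + Z) / dl)).
  assert (HQ0 : 0 <= Q) by apply Rmax_l.
  assert (HQ1 : 2 * (M + eps + Z) / dl <= Q) by apply Rmax_r.
  set (q := 1 + Q / c0).
  assert (Hq : 1 <= q) by (unfold q; assert (0 <= Q / c0) by (apply Rdiv_le_0_compat; auto); lra).
  exists (INR n * q). intros x Hx.
  assert (Hr0 : 0 <= INR n * q) by (apply Rmult_le_pos; [apply pos_INR|lra]).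
  assert (HSQ : Q < Sv n A coef x).
  { unfold norm in Hx.
    assert (Hsum : (INR n * q) ^ 2 < Rsum n (fun i => x i ^ 2)).
    { destruct (Rle_or_lt (Rsum n (fun i => x i ^ 2)) ((INR n * q) ^ 2)) as [H|H]; auto.
      apply sqrt_le_1_alt in H. rewrite sqrt_pow2 in H by auto. lra. }
    destruct (classic (exists i, (i < n)%nat /\ INR n * q * q < x i ^ 2)) as [[i [Hi Hxi]]|Hno].
    - assert (Hn1 : 1 <= INR n) by (apply (le_INR 1); lia).
      assert (q <= INR n * q * q) by nra.
      assert (c0 * x i ^ 2 <= Sv n A coef x) by (apply (S_large n A coef c0 x i); auto; lra).
      assert (c0 * q < c0 * x i ^ 2) by (apply Rmult_lt_compat_l; lra).
      assert (c0 * q = c0 + Q) by (unfold q; field; lra). lra.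
    - exfalso.
      assert (Rsum n (fun i => x i ^ 2) <= Rsum n (fun _ => INR n * q * q)).
      { apply Rsum_le. intros i Hi. apply Rnot_lt_le. intro. apply Hno. exists i. auto. }
      rewrite Rsum_const in H. assert ((INR n * q) ^ 2 = INR n * (INR n * q * q)) by ring. lra. }
  assert (Hl := eval_lower n A coef lam x Hwf HC1 HC2 Hmb).
  fold dl in Hl. specialize (HZ x).
  assert (HS0 := Sv_nonneg n A coef x HC2).
  assert (eps * (1 + Sv n A coef x / c0) = eps + dl * Sv n A coef x / 2) by (unfold eps; field; lra).
  assert (dl * Q / 2 >= M + eps + Z).
  { assert (2 * (M + eps + Z) / dl * dl = 2 * (M + eps + Z)) by (field; lra). nra. }
  nra.
Qed.
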